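(* Let $E\subseteq\mathrm{Lim}(\omega_1)$ be stationary and let $S=(x_\gamma)_{\gamma\in E}$ be a $\clubsuit(E)$-sequence. Let $\kappa$ be any cardinal and $P=\Pi^*_{\kappa}\mathrm{Fn}(\omega,2)$. Then $P$ forces that $S$ is a $\clubsuit(E)$-sequence.
   Context: $\mathrm{Lim}(\omega_1)$ is the set of countable limit ordinals. A $\clubsuit(E)$-sequence is $(x_\gamma)_{\gamma\in E}$ with each $x_\gamma$ a cofinal subset of $\gamma$ of order type $\omega$ such that for every $y\in[\omega_1]^{\aleph_1}$ there is $\gamma\in E$ with $x_\gamma\subseteq y$. $\mathrm{Fn}(\omega,2)$ is the set of finite partial functions from $\omega$ to $2$ ordered by reverse inclusion. $\Pi^*_{\kappa}\mathrm{Fn}(\omega,2)$ is the set of functions $p:\kappa\to\mathrm{Fn}(\omega,2)$ with $\mathrm{supp}(p)=\{i:p(i)\neq\emptyset\}$ countable, ordered by $p\leq q$ iff $p(i)\supseteq q(i)$ for all $i<\kappa$ and $\{i : p(i)\supsetneq q(i)\supsetneq\emptyset\}$ is finite. *)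

(* Defs.v *)
From Stdlib Require Import List.
Set Implicit Arguments.

Definition countable {T : Type} (A : T -> Prop) : Prop :=
  exists f : T -> nat, forall x y, A x -> A y -> f x = f y -> x = y.

Definition finite_set {T : Type} (A : T -> Prop) : Prop :=
  exists l : list T, forall x, A x -> In x l.

Definition is_omega1 (W : Type) (lt : W -> W -> Prop) : Prop :=
  (forall a, ~ lt a a) /\
  (forall a b c, lt a b -> lt b c -> lt a c) /\
  (forall a b, lt a b \/ a = b \/ lt b a) /\
  well_founded lt /\
  ~ countable (fun _ : W => True) /\
  (forall a, countable (fun b => lt b a)).

Definition le_of {W : Type} (lt : W -> W -> Prop) (a b : W) : Prop :=
  lt a b \/ a = b.

Definition is_limit {W : Type} (lt : W -> W -> Prop) (g : W) : Prop :=
  (exists b, lt b g) /\ (forall b, lt b g -> exists c, lt b c /\ lt c g).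

Definition unbounded {W : Type} (lt : W -> W -> Prop) (A : W -> Prop) : Prop :=
  forall a, exists b, A b /\ le_of lt a b.

Definition club {W : Type} (lt : W -> W -> Prop) (C : W -> Prop) : Prop :=
  unbounded lt C /\
  (forall g, is_limit lt g ->
     (forall b, lt b g -> exists c, C c /\ lt b c /\ lt c g) -> C g).

Definition stationary {W : Type} (lt : W -> W -> Prop) (E : W -> Prop) : Prop :=
  forall C, club lt C -> exists g, C g /\ E g.

(* x is a cofinal subset of g of order type omega *)
Definition cofinal_omega {W : Type} (lt : W -> W -> Prop) (x : W -> Prop) (g : W)
  : Prop :=
  (forall d, x d -> lt d g) /\
  (forall b, lt b g -> exists d, x d /\ lt b d) /\
  ~ finite_set x /\
  (forall d, x d -> finite_set (fun e => x e /\ lt e d)).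

Definition clubsuit_seq {W : Type} (lt : W -> W -> Prop) (E : W -> Prop)
  (xs : W -> W -> Prop) : Prop :=
  (forall g, E g -> cofinal_omega lt (xs g) g) /\
  (forall y : W -> Prop, ~ countable y ->
     exists g, E g /\ (forall d, xs g d -> y d)).

(* a finite partial function omega -> 2 *)
Definition Fn_elt (f : nat -> option bool) : Prop :=
  exists N, forall n, N <= n -> f n = None.

Definition fn_ext (f g : nat -> option bool) : Prop :=
  forall n b, g n = Some b -> f n = Some b.

Definition fn_nonempty (f : nat -> option bool) : Prop :=
  exists n, f n <> None.

Definition fn_sext (f g : nat -> option bool) : Prop :=
  fn_ext f g /\ exists n, g n = None /\ f n <> None.

(* conditions of Pi^*_K Fn(omega,2), K an index set of size kappa *)
Definition PiStar_cond {K : Type} (p : K -> nat -> option bool) : Prop :=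
  (forall i, Fn_elt (p i)) /\ countable (fun i => fn_nonempty (p i)).

(* p <= q  (p is stronger) *)
Definition PiStar_le {K : Type} (p q : K -> nat -> option bool) : Prop :=
  (forall i, fn_ext (p i) (q i)) /\
  finite_set (fun i => fn_sext (p i) (q i) /\ fn_sext (q i) (fun _ => None)).

(* A name for a subset of W is given by Y : W -> cond -> Prop, meaning
   the name { (alpha-check, p) | Y alpha p }.  Every name for a subset of a
   ground-model set is equivalent to one of this form. *)
Definition forces_mem {K W : Type} (Y : W -> (K -> nat -> option bool) -> Prop)
  (q : K -> nat -> option bool) (a : W) : Prop :=
  forall r, PiStar_cond r -> PiStar_le r q ->
    exists s p, PiStar_cond s /\ PiStar_le s r /\
                PiStar_cond p /\ Y a p /\ PiStar_le s p.

Definition forces_unbounded {K W : Type} (lt : W -> W -> Prop)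
  (Y : W -> (K -> nat -> option bool) -> Prop) (p : K -> nat -> option bool)
  : Prop :=
  forall b r, PiStar_cond r -> PiStar_le r p ->
    exists s a, PiStar_cond s /\ PiStar_le s r /\ le_of lt b a /\ forces_mem Y s a.

Definition forces_clubsuit_hit {K W : Type} (E : W -> Prop) (xs : W -> W -> Prop)
  (Y : W -> (K -> nat -> option bool) -> Prop) (p : K -> nat -> option bool)
  : Prop :=
  forall r, PiStar_cond r -> PiStar_le r p ->
    exists s g, PiStar_cond s /\ PiStar_le s r /\ E g /\
                (forall d, xs g d -> forces_mem Y s d).

(* Main.v *)
Require Import Defs.
From Stdlib Require Import List Arith Lia Classical ClassicalEpsilon FunctionalExtensionality Cantor.

Lemma pair_inj a b c d : to_nat (a, b) = to_nat (c, d) -> a = c /\ b = d.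
Proof.
  intro H. apply (f_equal of_nat) in H. rewrite !cancel_of_to in H.
  inversion H; auto.
Qed.

Lemma countable_sub {T} (A B : T -> Prop) :
  (forall x, A x -> B x) -> countable B -> countable A.
Proof.
  intros HAB [f Hf]. exists f. intros x y Hx Hy. apply Hf; auto.
Qed.

Lemma countable_union {T U} (I : T -> Prop) (A : T -> U -> Prop) :
  countable I -> (forall t, I t -> countable (A t)) ->
  countable (fun u => exists t, I t /\ A t u).
Proof.
  intros [g Hg] HA.
  pose (F := fun t : T => match excluded_middle_informative (countable (A t)) with
             | left H => proj1_sig (constructive_indefinite_description _ H)
             | right _ => fun _ : U => 0 end).
  assert (HF : forall t, I t -> forall x y, A t x -> A t y -> F t x = F t y -> x = y).
  { intros t It. unfold F. destruct (excluded_middle_informative (countable (A t))) as [H|H].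
    - destruct (constructive_indefinite_description _ H) as [f Hf]. simpl. exact Hf.
    - exfalso; apply H, HA, It. }
  exists (fun u => match excluded_middle_informative (exists t, I t /\ A t u) with
          | left H => let t := proj1_sig (constructive_indefinite_description _ H) in
                      to_nat (g t, F t u)
          | right _ => 0 end).
  intros x y Hx Hy.
  destruct (excluded_middle_informative (exists t, I t /\ A t x)) as [Ex|Ex]; [|contradiction].
  destruct (excluded_middle_informative (exists t, I t /\ A t y)) as [Ey|Ey]; [|contradiction].
  destruct (constructive_indefinite_description _ Ex) as [tx [Itx Atx]].
  destruct (constructive_indefinite_description _ Ey) as [ty [Ity Aty]]. simpl.
  intro E. apply pair_inj in E as [E1 E2].
  assert (tx = ty) by (apply Hg; auto). subst ty.
  eapply HF; eauto.
Qed.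

Lemma countable_single {T} (a : T) : countable (fun x => x = a).
Proof. exists (fun _ => 0). intros x y -> ->. reflexivity. Qed.

Lemma countable_union2 {T} (A B : T -> Prop) :
  countable A -> countable B -> countable (fun x => A x \/ B x).
Proof.
  intros cA cB.
  apply countable_sub with (B := fun x => exists b : bool, True /\ (if b then A x else B x)).
  - intros x [H|H]; [exists true|exists false]; auto.
  - apply countable_union.
    + exists (fun b : bool => if b then 0 else 1). intros [] [] _ _ H; try reflexivity; discriminate.
    + intros [] _; auto.
Qed.

Lemma countable_image {T U} (A : T -> Prop) (phi : T -> U) :
  countable A -> countable (fun y => exists x, A x /\ y = phi x).
Proof.
  intro cA. apply countable_union; auto. intros t _. apply countable_single.
Qed.

Fixpoint listcode (l : list nat) : nat :=
  match l with nil => 0 | x :: l' => S (to_nat (x, listcode l')) end.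

Lemma listcode_inj l1 l2 : listcode l1 = listcode l2 -> l1 = l2.
Proof.
  revert l2; induction l1 as [|x l1 IH]; intros [|y l2]; simpl; try discriminate; auto.
  intro H. injection H as H. apply pair_inj in H as [-> H]. f_equal; auto.
Qed.

Definition fs_code (f : nat -> nat) : nat :=
  match excluded_middle_informative (exists N, forall n, N <= n -> f n = 0) with
  | left H => listcode (map f (seq 0 (proj1_sig (constructive_indefinite_description _ H))))
  | right _ => 0 end.

Lemma map_seq_eq (f g : nat -> nat) N a :
  map f (seq a N) = map g (seq a N) -> forall n, a <= n < a + N -> f n = g n.
Proof.
  revert a; induction N as [|N IH]; intros a H n Hn; [lia|].
  simpl in H. injection H as H1 H2.
  destruct (Nat.eq_dec n a) as [->|]; auto.
  apply (IH (S a)); auto; lia.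
Qed.

Lemma fs_code_inj f g :
  (exists N, forall n, N <= n -> f n = 0) -> (exists N, forall n, N <= n -> g n = 0) ->
  fs_code f = fs_code g -> forall n, f n = g n.
Proof.
  intros Ef Eg. unfold fs_code.
  destruct (excluded_middle_informative (exists N, forall n, N <= n -> f n = 0)) as [Hf|]; [|contradiction].
  destruct (excluded_middle_informative (exists N, forall n, N <= n -> g n = 0)) as [Hg|]; [|contradiction].
  destruct (constructive_indefinite_description _ Hf) as [Nf Pf].
  destruct (constructive_indefinite_description _ Hg) as [Ng Pg]. simpl.
  intro H. apply listcode_inj in H.
  assert (Nf = Ng) as <-.
  { apply (f_equal (@length nat)) in H. rewrite !length_map, !length_seq in H. exact H. }
  intro n. destruct (le_lt_dec Nf n).
  - rewrite Pf, Pg; auto.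
  - apply (map_seq_eq f g Nf 0 H). lia.
Qed.

Definition ob2n (o : option bool) : nat :=
  match o with None => 0 | Some false => 1 | Some true => 2 end.

Definition codeFn (f : nat -> option bool) : nat := fs_code (fun n => ob2n (f n)).

Lemma codeFn_inj f g : Fn_elt f -> Fn_elt g -> codeFn f = codeFn g -> forall n, f n = g n.
Proof.
  intros [Nf Hf] [Ng Hg] H n.
  assert (E : ob2n (f n) = ob2n (g n)).
  { apply (fs_code_inj _ _) with (n := n) in H; auto.
    - exists Nf. intros m Hm. rewrite Hf; auto.
    - exists Ng. intros m Hm. rewrite Hg; auto. }
  destruct (f n) as [[]|], (g n) as [[]|]; simpl in E; try discriminate; auto.
Qed.

Definition CK (K : Type) := K -> nat -> option bool.
Definition pe {K} (s q : CK K) := forall i, fn_nonempty (q i) -> forall n, s i n = q i n.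
Definition papp {K} (q h : CK K) : CK K :=
  fun i n => match h i n with Some b => Some b | None => q i n end.
Definition patch_on {K} (h q : CK K) :=
  (forall i, Fn_elt (h i)) /\ (forall i, fn_nonempty (h i) -> fn_nonempty (q i)) /\
  finite_set (fun i => fn_nonempty (h i)).

Lemma not_ne f : ~ fn_nonempty f -> forall n, f n = None.
Proof. intros H n. destruct (f n) eqn:E; auto. exfalso; apply H; exists n; congruence. Qed.

Lemma pe_refl {K} (q : CK K) : pe q q.
Proof. intros i _ n; auto. Qed.

Lemma pe_trans {K} (a b c : CK K) : pe a b -> pe b c -> pe a c.
Proof.
  intros H1 H2 i Hc n. rewrite <- (H2 i Hc n). apply H1.
  destruct Hc as [m Hm]. exists m. rewrite H2; auto. exists m; auto.
Qed.

Lemma pe_supp {K} (s q : CK K) i : pe s q -> fn_nonempty (q i) -> fn_nonempty (s i).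
Proof. intros H Hq. destruct Hq as [m Hm]. exists m. rewrite H; auto. exists m; auto. Qed.

Lemma pe_le {K} (s q : CK K) : pe s q -> PiStar_le s q.
Proof.
  intros H. split.
  - intros i n b E. rewrite H; auto. exists n; congruence.
  - exists nil. intros i [[_ [n [Hn1 Hn2]]] Hq].
    exfalso. apply Hn2. rewrite H; auto.
    destruct Hq as [_ [m [_ Hm]]]. exists m; auto.
Qed.

Lemma sext_empty f : fn_sext f (fun _ => None) <-> fn_nonempty f.
Proof.
  split.
  - intros [_ [n [_ Hn]]]. exists n; auto.
  - intros [n Hn]. split; [intros m b E; discriminate|]. exists n; auto.
Qed.

Lemma le_trans {K} (a b c : CK K) : PiStar_le a b -> PiStar_le b c -> PiStar_le a c.
Proof.
  intros [Eab [L1 HL1]] [Ebc [L2 HL2]]. split.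
  - intros i n x E. apply Eab, Ebc, E.
  - exists (L1 ++ L2). intros i [Sac Sc]. apply in_or_app.
    destruct (classic (fn_sext (b i) (c i))) as [Sbc|Sbc].
    + right. apply HL2. auto.
    + left. apply HL1.
      assert (Hbc : forall n, c i n = None -> b i n = None).
      { intros n Hn. destruct (b i n) eqn:Eb; auto. exfalso. apply Sbc. split; auto.
        exists n. split; auto. congruence. }
      destruct Sac as [_ [n [Hn1 Hn2]]]. split.
      * split; auto. exists n. split; auto.
      * apply sext_empty. apply sext_empty in Sc. destruct Sc as [m Hm].
        exists m. destruct (c i m) eqn:E; [|congruence]. rewrite (Ebc i m b0 E). discriminate.
Qed.

Lemma forces_mono {K W} (Y : W -> CK K -> Prop) s1 s2 a :
  PiStar_le s1 s2 -> forces_mem Y s2 a -> forces_mem Y s1 a.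
Proof.
  intros Hle Hf r Cr Hr. apply Hf; auto. eapply le_trans; eauto.
Qed.

Lemma patch_mono {K} (h q q' : CK K) :
  patch_on h q -> (forall i, fn_nonempty (q i) -> fn_nonempty (q' i)) -> patch_on h q'.
Proof. intros [H1 [H2 H3]] Hs. split; [|split]; auto. Qed.

Lemma papp_pe {K} (q1 q2 h : CK K) :
  PiStar_cond q1 -> pe q1 q2 -> patch_on h q2 ->
  PiStar_cond (papp q1 h) /\ PiStar_le (papp q1 h) (papp q2 h).
Proof.
  intros [F1 C1] Hpe [Fh [Sh _]]. split; [split|split].
  - intro i. destruct (F1 i) as [N1 H1], (Fh i) as [N2 H2]. exists (N1 + N2).
    intros n Hn. unfold papp. rewrite H2 by lia. apply H1; lia.
  - apply countable_sub with (B := fun i => fn_nonempty (q1 i)); auto.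
    intros i [n Hn]. unfold papp in Hn. destruct (h i n) eqn:E.
    + apply pe_supp with (q := q2); auto. apply Sh. exists n; congruence.
    + exists n; auto.
  - intros i n b. unfold papp. destruct (h i n); auto.
    intro E. rewrite Hpe; auto. exists n; congruence.
  - exists nil. intros i [[_ [n [Hn1 Hn2]]] Hs]. exfalso.
    apply sext_empty in Hs.
    unfold papp in Hn1, Hn2. destruct (h i n) eqn:Eh; [discriminate|].
    assert (Q2 : fn_nonempty (q2 i)).
    { destruct Hs as [m Hm]. unfold papp in Hm. destruct (h i m) eqn:E.
      - apply Sh. exists m; congruence.
      - exists m; auto. }
    apply Hn2. rewrite Hpe; auto.
Qed.

Lemma decompose {K} (s q : CK K) :
  PiStar_cond s -> PiStar_le s q ->
  exists q' h, PiStar_cond q' /\ pe q' q /\ patch_on h q /\ papp q' h = s.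
Proof.
  intros [Fs Cs] [Ext [L HL]].
  pose (q' := fun i n => if excluded_middle_informative (fn_nonempty (q i)) then q i n else s i n).
  pose (h := fun i n => if excluded_middle_informative (fn_nonempty (q i) /\ fn_sext (s i) (q i))
                        then s i n else None).
  exists q', h. split; [|split; [|split]].
  - split.
    + intro i. unfold q'. destruct (excluded_middle_informative (fn_nonempty (q i))) as [Hq|Hq]; auto.
      destruct (Fs i) as [N HN]. exists N. intros n Hn. specialize (HN n Hn).
      destruct (q i n) eqn:E; auto. rewrite (Ext i n b E) in HN. discriminate.
    + apply countable_sub with (B := fun i => fn_nonempty (s i)); auto.
      intros i [n Hn]. unfold q' in Hn.
      destruct (excluded_middle_informative (fn_nonempty (q i))); [|exists n; auto].
      destruct (q i n) eqn:E; [|congruence]. exists n. rewrite (Ext i n b E). discriminate.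
  - intros i Hq n. unfold q'. destruct (excluded_middle_informative (fn_nonempty (q i))); tauto.
  - split; [|split].
    + intro i. unfold h. destruct (excluded_middle_informative _); auto. exists 0; auto.
    + intros i [n Hn]. unfold h in Hn. destruct (excluded_middle_informative _) as [[? ?]|]; tauto.
    + exists L. intros i [n Hn]. unfold h in Hn. destruct (excluded_middle_informative _) as [[A B]|]; [|tauto].
      apply HL. split; auto. apply sext_empty; auto.
  - apply functional_extensionality; intro i. apply functional_extensionality; intro n.
    unfold papp, q', h.
    destruct (excluded_middle_informative (fn_nonempty (q i) /\ fn_sext (s i) (q i))) as [[A B]|A].
    + destruct (s i n) eqn:E; auto.
      destruct (excluded_middle_informative (fn_nonempty (q i))); auto.
      destruct (q i n) eqn:E2; auto. rewrite (Ext i n b E2) in E. discriminate.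
    + destruct (excluded_middle_informative (fn_nonempty (q i))) as [Hq|Hq].
      * destruct (q i n) eqn:E2.
        -- symmetry. apply (Ext i n b E2).
        -- destruct (s i n) eqn:E; auto. exfalso. apply A. split; auto.
           split; auto. exists n. split; auto. congruence.
      * reflexivity.
Qed.

Lemma list_bound {K} (e : K -> nat) (L : list K) : exists N, forall i, In i L -> e i < N.
Proof.
  induction L as [|a L [N HN]]. - exists 0; intros i []. 
  - exists (S (e a) + N). intros i [<-|H]; [lia|]. specialize (HN i H); lia.
Qed.

Lemma countable_patches {K} (q : CK K) :
  countable (fun i => fn_nonempty (q i)) -> countable (fun h => patch_on h q).
Proof.
  intros [e He].
  pose (g := fun (h : CK K) m =>
    match excluded_middle_informative (exists i, fn_nonempty (h i) /\ e i = m) with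
    | left H => S (codeFn (h (proj1_sig (constructive_indefinite_description _ H))))
    | right _ => 0 end).
  assert (Key : forall h, patch_on h q -> forall i, fn_nonempty (q i) ->
     (fn_nonempty (h i) /\ g h (e i) = S (codeFn (h i))) \/ (~ fn_nonempty (h i) /\ g h (e i) = 0)).
  { intros h [_ [Sh _]] i Hq. unfold g.
    destruct (excluded_middle_informative (exists j, fn_nonempty (h j) /\ e j = e i)) as [H|H].
    - destruct (constructive_indefinite_description _ H) as [j [Hj Ej]]; simpl.
      assert (j = i) as -> by (apply He; auto). left; auto.
    - right. split; auto. intro Hh. apply H. exists i; auto. }
  assert (Fin : forall h, patch_on h q -> exists N, forall m, N <= m -> g h m = 0).
  { intros h [_ [_ [L HL]]]. destruct (list_bound e L) as [N HN]. exists N.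
    intros m Hm. unfold g.
    destruct (excluded_middle_informative (exists i, fn_nonempty (h i) /\ e i = m)) as [[i [Hi Ei]]|]; auto.
    specialize (HN i (HL i Hi)). lia. }
  exists (fun h => fs_code (g h)).
  intros h1 h2 P1 P2 E. pose proof (fs_code_inj _ _ (Fin h1 P1) (Fin h2 P2) E) as E0; clear E; rename E0 into E.
  apply functional_extensionality; intro i. apply functional_extensionality; intro n.
  destruct (classic (fn_nonempty (q i))) as [Hq|Hq].
  - pose proof (E (e i)) as Ei.
    destruct (Key h1 P1 i Hq) as [[A1 B1]|[A1 B1]], (Key h2 P2 i Hq) as [[A2 B2]|[A2 B2]];
      rewrite B1, B2 in Ei; try discriminate.
    + injection Ei as Ei. apply codeFn_inj; auto. apply P1. apply P2.
    + rewrite !not_ne; auto.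
  - destruct P1 as [_ [S1 _]], P2 as [_ [S2 _]].
    rewrite !not_ne; auto.
Qed.

Lemma bounded {W} (lt : W -> W -> Prop) : is_omega1 lt ->
  forall A : W -> Prop, countable A -> exists b, forall a, A a -> lt a b.
Proof.
  intros (Irr & Tr & Tri & Wf & Unc & Seg) A cA.
  apply NNPP. intro Hn. apply Unc.
  apply countable_sub with (B := fun c => exists a, A a /\ (lt c a \/ c = a)).
  - intros c _. apply NNPP. intro H2. apply Hn. exists c. intros a Ha.
    destruct (Tri a c) as [H|[H|H]]; auto; exfalso; apply H2; exists a; auto.
  - apply countable_union; auto. intros a _. apply countable_union2; auto. apply countable_single.
Qed.

Lemma least {W} (lt : W -> W -> Prop) : well_founded lt ->
  forall P : W -> Prop, forall w, P w -> exists m, P m /\ forall y, lt y m -> ~ P y.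
Proof.
  intros Wf P w Pw. apply NNPP; intro Hn.
  assert (forall x, ~ P x).
  { intro x. induction x as [x IH] using (well_founded_ind Wf). intro Px.
    apply Hn. exists x. split; auto. }
  eapply H; eauto.
Qed.

Lemma sup_seq {W} (lt : W -> W -> Prop) : is_omega1 lt ->
  forall d : nat -> W, exists s, (forall n, lt (d n) s) /\
     (forall x, lt x s -> exists n, le_of lt x (d n)).
Proof.
  intros Hw d. pose proof Hw as (Irr & Tr & Tri & Wf & Unc & Seg).
  destruct (bounded lt Hw (fun w => exists n, True /\ w = d n)) as [b Hb].
  { apply countable_image. exists (fun n => n). auto. }
  destruct (least lt Wf (fun s => forall n, lt (d n) s) b) as [s [Hs Hmin]].
  { intro n. apply Hb. exists n; auto. }
  exists s. split; auto. intros x Hx. apply NNPP; intro H.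
  apply (Hmin x Hx). intro n. destruct (Tri (d n) x) as [?|[?|?]]; auto;
    exfalso; apply H; exists n; unfold le_of; auto.
Qed.

Definition stepP {K W} (lt : W -> W -> Prop) (Y : W -> CK K -> Prop) (d : W)
  (q q' h : CK K) (a : W) : Prop :=
  PiStar_cond q' /\ pe q' q /\ patch_on h q /\ PiStar_cond (papp q' h) /\
  PiStar_le (papp q' h) q /\ le_of lt d a /\ forces_mem Y (papp q' h) a.

Definition choose_step {K W} (lt : W -> W -> Prop) (Y : W -> CK K -> Prop) (d : W) (q : CK K)
  : CK K * CK K * W :=
  match excluded_middle_informative
    (exists t : CK K * CK K * W, stepP lt Y d q (fst (fst t)) (snd (fst t)) (snd t)) with
  | left H => proj1_sig (constructive_indefinite_description _ H)
  | right _ => (q, q, d) end.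

Lemma choose_step_spec {K W} lt (Y : W -> CK K -> Prop) d q :
  (exists t : CK K * CK K * W, stepP lt Y d q (fst (fst t)) (snd (fst t)) (snd t)) ->
  stepP lt Y d q (fst (fst (choose_step lt Y d q))) (snd (fst (choose_step lt Y d q)))
    (snd (choose_step lt Y d q)).
Proof.
  intro H. unfold choose_step. destruct (excluded_middle_informative _) as [H'|]; [|contradiction].
  destruct (constructive_indefinite_description _ H') as [t Ht]. exact Ht.
Qed.

Lemma step_exists {K W} lt (Y : W -> CK K -> Prop) p d q :
  forces_unbounded lt Y p -> PiStar_cond q -> PiStar_le q p ->
  exists t : CK K * CK K * W, stepP lt Y d q (fst (fst t)) (snd (fst t)) (snd t).
Proof.
  intros Hu Cq Lq. destruct (Hu d q Cq Lq) as (s & a & Cs & Ls & Da & Fa).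
  destruct (decompose s q Cs Ls) as (q' & h & Cq' & Pq' & Ph & E).
  exists (q', h, a). simpl. subst s. exact (conj Cq' (conj Pq' (conj Ph (conj Cs (conj Ls (conj Da Fa)))))). 
Qed.

Definition uni {K W} (lt : W -> W -> Prop) (r : CK K) (d : W) (f : forall x, lt x d -> CK K)
  : CK K :=
  fun i n => match excluded_middle_informative
                (exists x : {x : W | lt x d}, f (proj1_sig x) (proj2_sig x) i n <> None) with
  | left H => let x := proj1_sig (constructive_indefinite_description _ H) in
              f (proj1_sig x) (proj2_sig x) i n
  | right _ => r i n end.

Definition seqR {K W} (lt : W -> W -> Prop) (Y : W -> CK K -> Prop) (r : CK K)
  (wf : well_founded lt) : W -> CK K :=
  Fix wf (fun _ => CK K) (fun d rec => fst (fst (choose_step lt Y d (uni lt r d rec)))).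

Definition uS {K W} lt (Y : W -> CK K -> Prop) r wf d := uni lt r d (fun x _ => seqR lt Y r wf x).
Definition HS {K W} lt (Y : W -> CK K -> Prop) r wf d :=
  snd (fst (choose_step lt Y d (uS lt Y r wf d))).
Definition AS {K W} lt (Y : W -> CK K -> Prop) r wf d :=
  snd (choose_step lt Y d (uS lt Y r wf d)).

Lemma seqR_eq {K W} lt (Y : W -> CK K -> Prop) r wf d :
  seqR lt Y r wf d = fst (fst (choose_step lt Y d (uS lt Y r wf d))).
Proof.
  unfold seqR at 1. rewrite Fix_eq. reflexivity.
  intros x f g Hfg.
  assert (f = g) as ->; auto.
  apply functional_extensionality_dep; intro y. apply functional_extensionality_dep; intro pr. auto.
Qed.

Definition Inv {K W} lt (Y : W -> CK K -> Prop) r wf d :=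
  PiStar_cond (uS lt Y r wf d) /\ pe (uS lt Y r wf d) r /\
  (forall x, lt x d -> pe (uS lt Y r wf d) (seqR lt Y r wf x)) /\
  stepP lt Y d (uS lt Y r wf d) (seqR lt Y r wf d) (HS lt Y r wf d) (AS lt Y r wf d).

Lemma inv_all {K W} (lt : W -> W -> Prop) (Y : W -> CK K -> Prop) p r wf :
  is_omega1 lt -> PiStar_cond r -> PiStar_le r p -> forces_unbounded lt Y p ->
  forall d, Inv lt Y r wf d.
Proof.
  intros Hw Cr Lr Hu. pose proof Hw as (Irr & Tr & Tri & Wf & Unc & Seg).
  set (R := seqR lt Y r wf). set (u := uS lt Y r wf).
  intro d. induction d as [d IH] using (well_founded_ind wf).
  assert (PR : forall x, lt x d -> pe (R x) r).
  { intros x Hx. destruct (IH x Hx) as (_ & P1 & _ & (_ & P2 & _)). eapply pe_trans; eauto. }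
  assert (PRR : forall x y, lt x y -> lt y d -> pe (R y) (R x)).
  { intros x y Hxy Hy. destruct (IH y Hy) as (_ & _ & P1 & (_ & P2 & _)). eapply pe_trans; eauto. }
  assert (CR : forall x, lt x d -> PiStar_cond (R x)).
  { intros x Hx. apply (IH x Hx). }
  assert (Ua : forall i x, lt x d -> fn_nonempty (R x i) -> forall n, u d i n = R x i n).
  { intros i x Hx Hne n. unfold u, uS, uni.
    destruct (excluded_middle_informative _) as [H|H].
    - destruct (constructive_indefinite_description _ H) as [[y Hy] Hyn]. simpl in *.
      fold R in Hyn |- *.
      destruct (Tri x y) as [Hxy|[<-|Hxy]]; auto.
      + apply (PRR x y Hxy Hy); auto.
      + symmetry. apply (PRR y x Hxy Hx). exists n; auto.
    - fold R in H. destruct (R x i n) eqn:E.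
      + exfalso. apply H. exists (exist _ x Hx). simpl. fold R. congruence.
      + destruct (r i n) eqn:E2; auto. rewrite (PR x Hx i) in E; [congruence|]. exists n; congruence. }
  assert (Ub : forall i, (forall x, lt x d -> ~ fn_nonempty (R x i)) -> forall n, u d i n = r i n).
  { intros i Hn n. unfold u, uS, uni.
    destruct (excluded_middle_informative _) as [H|H]; auto.
    destruct (constructive_indefinite_description _ H) as [[y Hy] Hyn]. simpl in *.
    exfalso. apply (Hn y Hy). exists n. auto. }
  assert (Cu : PiStar_cond (u d)).
  { split.
    - intro i. destruct (classic (exists x, lt x d /\ fn_nonempty (R x i))) as [[x [Hx Hne]]|Hn].
      + destruct (proj1 (CR x Hx) i) as [N HN]. exists N. intros n Hn. rewrite (Ua i x Hx Hne). auto.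
      + destruct (proj1 Cr i) as [N HN]. exists N. intros n Hn'.
        rewrite Ub; auto. intros x Hx Hne. apply Hn. eauto.
    - apply countable_sub with
        (B := fun i => fn_nonempty (r i) \/ exists x, lt x d /\ fn_nonempty (R x i)).
      + intros i [n Hn]. destruct (classic (exists x, lt x d /\ fn_nonempty (R x i))) as [H|H]; auto.
        left. exists n. rewrite <- Ub; auto. intros x Hx Hne. apply H. eauto.
      + apply countable_union2. apply Cr. apply countable_union. apply Seg.
        intros x Hx. apply (CR x Hx). }
  assert (Pu : pe (u d) r).
  { intros i Hr n. destruct (classic (exists x, lt x d /\ fn_nonempty (R x i))) as [[x [Hx Hne]]|H].
    - rewrite (Ua i x Hx Hne). apply (PR x Hx i Hr).
    - apply Ub. intros x Hx Hne. apply H. eauto. }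
  split; [|split; [|split]]; auto.
  - intros x Hx i Hne n. apply (Ua i x Hx Hne).
  - unfold R, HS, AS. rewrite seqR_eq. fold u. apply choose_step_spec.
    eapply step_exists; eauto. eapply le_trans; [apply pe_le; exact Pu|exact Lr].
Qed.

Theorem lemma3p7 (W : Type) (lt : W -> W -> Prop) (E : W -> Prop)
  (xs : W -> W -> Prop) (K : Type) :
  is_omega1 lt ->
  (forall g, E g -> is_limit lt g) ->
  stationary lt E ->
  clubsuit_seq lt E xs ->
  forall (Y : W -> (K -> nat -> option bool) -> Prop) (p : K -> nat -> option bool),
    PiStar_cond p ->
    forces_unbounded lt Y p ->
    forces_clubsuit_hit E xs Y p.
Proof.
  intros Hw _ _ [Hcof Hguess] Y p Cp Hu r Cr Lr.
  pose proof Hw as (Irr & Tr & Tri & Wf & Unc & Seg).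
  pose proof (inv_all lt Y p r Wf Hw Cr Lr Hu) as Inv0.
  set (R := seqR lt Y r Wf) in *. set (u := uS lt Y r Wf) in *.
  set (H := HS lt Y r Wf) in *. set (A := AS lt Y r Wf) in *.
  assert (PRR : forall x y, lt x y -> pe (R y) (R x)).
  { intros x y Hxy. destruct (Inv0 y) as (_ & _ & P1 & (_ & P2 & _)). eapply pe_trans; eauto. }
  assert (PR : forall x, pe (R x) r).
  { intros x. destruct (Inv0 x) as (_ & P1 & _ & (_ & P2 & _)). eapply pe_trans; eauto. }
  assert (Mono : forall x y i, le_of lt x y -> fn_nonempty (R x i) -> fn_nonempty (R y i)).
  { intros x y i [Hxy| <-] Hne; auto. exact (pe_supp (R y) (R x) i (PRR x y Hxy) Hne). }
  assert (Usupp : forall d i, fn_nonempty (u d i) ->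
            fn_nonempty (r i) \/ exists x, lt x d /\ fn_nonempty (R x i)).
  { intros d i [n Hn]. unfold u, uS, uni in Hn.
    destruct (excluded_middle_informative _) as [Hx|Hx].
    - destruct (constructive_indefinite_description _ Hx) as [[y Hy] Hyn]. simpl in *.
      right. exists y. split; auto. exists n; auto.
    - left. exists n; auto. }
  destruct (classic (exists w : W, True)) as [[w0 _]|Hne].
  2:{ exfalso. apply Unc. exists (fun _ => 0). intros x. exfalso. apply Hne. exists x; auto. }
  set (Yh := fun (h : CK K) (a : W) => exists d, H d = h /\ A d = a).
  assert (Claim : exists h, ~ countable (Yh h)).
  { apply NNPP. intro Hc.
    assert (Hc' : forall h, countable (Yh h)).
    { intro h. apply NNPP. intro H1. apply Hc. exists h; auto. }
    clear Hc.
    set (SS := fun x a => a = x \/ exists h, patch_on h (R x) /\ Yh h a).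
    assert (CS : forall x, countable (SS x)).
    { intro x. apply countable_union2. apply countable_single.
      apply countable_union; auto. apply countable_patches.
      destruct (Inv0 x) as (_ & _ & _ & (Cx & _)). apply Cx. }
    set (next := fun x => match excluded_middle_informative (exists b, forall a, SS x a -> lt a b) with
                          | left H1 => proj1_sig (constructive_indefinite_description _ H1)
                          | right _ => x end).
    assert (Next : forall x a, SS x a -> lt a (next x)).
    { intros x. unfold next. destruct (excluded_middle_informative _) as [H1|H1].
      - destruct (constructive_indefinite_description _ H1) as [b Hb]. exact Hb.
      - exfalso. apply H1. apply bounded; auto. }
    set (dseq := fun n => nat_rect (fun _ => W) w0 (fun _ x => next x) n).
    assert (Inc : forall n, lt (dseq n) (dseq (S n))).
    { intro n. change (dseq (S n)) with (next (dseq n)). apply Next. left; auto. }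
    assert (IncM : forall n m, n <= m -> le_of lt (dseq n) (dseq m)).
    { intros n m Hnm. induction Hnm as [|m Hnm IH]. right; reflexivity.
      left. destruct IH as [H1|H1]. eapply Tr; [exact H1|apply Inc]. rewrite H1. apply Inc. }
    destruct (sup_seq lt Hw dseq) as [s [Hs1 Hs2]].
    destruct (Inv0 s) as (_ & _ & _ & (_ & _ & [Fh [Sh [L HL]]] & _ & _ & Das & _)).
    assert (Cov : exists N, forall i, In i L -> fn_nonempty (H s i) -> fn_nonempty (R (dseq N) i)).
    { clear HL. induction L as [|i0 L [N HN]].
      - exists 0. intros i [].
      - assert (Hi0 : exists M, fn_nonempty (H s i0) -> fn_nonempty (R (dseq M) i0)).
        { destruct (classic (fn_nonempty (H s i0))) as [Hn|Hn]; [|exists 0; tauto].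
          destruct (Usupp s i0 (Sh i0 Hn)) as [Hr|[x [Hx Hx2]]].
          - exists 0. intros _. eapply pe_supp; eauto.
          - destruct (Hs2 x Hx) as [M HM]. exists M. intros _. eapply Mono; eauto. }
        destruct Hi0 as [M HM]. exists (N + M). intros i [<-|Hi] Hn.
        + eapply Mono; [apply IncM with (n := M); lia| auto].
        + eapply Mono; [apply IncM with (n := N); lia| auto]. }
    destruct Cov as [N HN].
    assert (SA : SS (dseq N) (A s)).
    { right. exists (H s). split.
      - split; [auto|split; [|exists L; auto]]. intros i Hi. apply HN; auto.
      - exists s; auto. }
    apply Next in SA. change (next (dseq N)) with (dseq (S N)) in SA.
    assert (Hl : lt (A s) s) by eauto.
    destruct Das as [H2|H2].
    - apply (Irr s). eapply Tr; eauto.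
    - unfold A in Hl. rewrite <- H2 in Hl. apply (Irr s Hl). }
  destruct Claim as [h Hh].
  destruct (Hguess _ Hh) as [g [Eg Hg]].
  set (D := fun d => match excluded_middle_informative (exists x, H x = h /\ A x = d) with
                     | left H1 => proj1_sig (constructive_indefinite_description _ H1)
                     | right _ => g end).
  assert (DS : forall d, xs g d -> H (D d) = h /\ A (D d) = d).
  { intros d Hd. unfold D. destruct (excluded_middle_informative _) as [H1|H1].
    - destruct (constructive_indefinite_description _ H1) as [x Hx]. exact Hx.
    - exfalso. apply H1. apply Hg; auto. }
  destruct (bounded lt Hw (fun y => exists d, xs g d /\ y = D d)) as [eta Heta].
  { apply countable_image. apply countable_sub with (B := fun d => lt d g).
    - intros d Hd. apply (Hcof g Eg); auto.
    - apply Seg. }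
  destruct (Hcof g Eg) as (_ & _ & Hinf & _).
  destruct (classic (exists d, xs g d)) as [[d0 Hd0]|Hn].
  2:{ exfalso. apply Hinf. exists nil. intros x Hx. apply Hn. eauto. }
  assert (Key : forall d, xs g d ->
     PiStar_cond (papp (R eta) h) /\ PiStar_le (papp (R eta) h) r /\ forces_mem Y (papp (R eta) h) d).
  { intros d Hd. destruct (DS d Hd) as [E1 E2].
    assert (Lt : lt (D d) eta) by (apply Heta; eauto).
    destruct (Inv0 (D d)) as (_ & Pur & _ & (CRd & PRd & Phd & Cpd & Lpd & _ & Fpd)).
    unfold H, A in E1, E2. rewrite E1, E2 in *.
    destruct (Inv0 eta) as (_ & _ & _ & (CReta & _)).
    destruct (papp_pe (R eta) (R (D d)) h CReta (PRR _ _ Lt)) as [C1 L1].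
    { eapply patch_mono; eauto. intros i Hi. eapply pe_supp; eauto. }
    split; [|split]; auto.
    - eapply le_trans; [exact L1|]. eapply le_trans; [exact Lpd|]. apply pe_le; auto.
    - eapply forces_mono; eauto. }
  exists (papp (R eta) h), g. destruct (Key d0 Hd0) as [C1 [L1 _]].
  split; [|split; [|split]]; auto.
  intros d Hd. apply Key; auto.
Qed.
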